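(* Let $X$ be a topological space which is not a Baire space. Then there exist a nonempty open set $U\subseteq X$ and a fragmentable function $f\colon X\to\mathbb R$ such that $f$ has no point of continuity in $U$ and $f(X)\subseteq\{1/n:n\in\mathbb N\}$. Moreover, if $X$ is perfectly normal, then $f$ can be chosen to have, in addition, the Lebesgue property.
   Context: A topological space is Baire if every nonempty open subset of it is nonmeager in it. $f\colon X\to\mathbb R$ is fragmentable if for every $\varepsilon>0$ and every nonempty closed $F\subseteq X$ there is an open $U$ with $U\cap F\neq\emptyset$ and $\operatorname{diam} f(U\cap F)<\varepsilon$; it has the Lebesgue property if for every $\varepsilon>0$ there are closed sets $X_n$ ($n\in\mathbb N$) with $X=\bigcup_n X_n$ and $\operatorname{diam} f(X_n)\le\varepsilon$ for all $n$. *)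

(* Defs.v *)
From HB Require Import structures.
From mathcomp Require Import all_boot all_order all_algebra.
From mathcomp Require Import all_classical all_reals all_analysis.
Set Implicit Arguments. Unset Strict Implicit. Unset Printing Implicit Defensive.
Import Order.TTheory GRing.Theory Num.Theory.
Import numFieldNormedType.Exports.
Local Open Scope classical_set_scope.
Local Open Scope ring_scope.

(* diameter of a subset of R, as an extended real (sup of |x - y|);
   diam set0 = -oo *)
Definition diam {R : realType} (S : set R) : \bar R :=
  ereal_sup [set (`|x - y|)%:E | x in S & y in S].

Definition nowhere_dense {X : topologicalType} (A : set X) : Prop :=
  (closure A)° = set0.

Definition meager {X : topologicalType} (A : set X) : Prop :=
  exists N : nat -> set X, (forall n, nowhere_dense (N n)) /\
    A `<=` \bigcup_n N n.

Definition baire_space (X : topologicalType) : Prop :=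
  forall U : set X, open U -> U !=set0 -> ~ meager U.

Definition fragmentable {R : realType} {X : topologicalType} (f : X -> R) : Prop :=
  forall eps : R, 0 < eps -> forall F : set X, closed F -> F !=set0 ->
    exists U : set X, [/\ open U, U `&` F !=set0 &
      (diam (f @` (U `&` F)) < eps%:E)%E].

Definition lebesgue_property {R : realType} {X : topologicalType} (f : X -> R) : Prop :=
  forall eps : R, 0 < eps -> exists Xn : nat -> set X,
    [/\ forall n, closed (Xn n), \bigcup_n Xn n = setT &
        forall n, (diam (f @` Xn n) <= eps%:E)%E].

Definition perfectly_normal (X : topologicalType) : Prop :=
  normal_space X /\
  forall A : set X, closed A ->
    exists G : nat -> set X, (forall n, open (G n)) /\ A = \bigcap_n G n.

(* Main.v *)
Require Import Defs.
From HB Require Import structures.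
From mathcomp Require Import all_boot all_order all_algebra.
From mathcomp Require Import all_classical all_reals all_analysis.
From mathcomp Require Import lra.
Import Order.TTheory GRing.Theory Num.Theory.
Import numFieldNormedType.Exports.
Local Open Scope classical_set_scope.
Local Open Scope ring_scope.

Lemma diam_le (R : realType) (S : set R) (c : R) :
  (forall a b, S a -> S b -> `|a - b| <= c) -> (diam S <= c%:E)%E.
Proof.
move=> h; apply: ge_ereal_sup => _ [a Sa [b Sb <-]]; rewrite lee_fin; exact: h.
Qed.

Section Construction.
Variables (R : realType) (X : topologicalType) (U : set X) (E : nat -> set X).
Hypotheses (hE0 : E 0 = set0) (hEc : forall n, closed (E n))
  (hEm : forall n, E n `<=` E n.+1) (hEcov : forall x, exists n, E n x).

Lemma Emono {i j} : (i <= j)%N -> E i `<=` E j.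
Proof.
elim: j => [|j IH]; first by rewrite leqn0 => /eqP ->.
rewrite leq_eqVlt => /orP[/eqP -> //|]; rewrite ltnS => /IH h.
exact: subset_trans h (hEm j).
Qed.

Lemma hEcovb x : exists n, `[< E n x >].
Proof. by have [n] := hEcov x; exists n; apply/asboolP. Qed.

Definition kk x := ex_minn (hEcovb x).
Definition ff x : R := (kk x)%:R^-1.

Lemma kkP x n : E n x <-> (kk x <= n)%N.
Proof.
rewrite /kk; case: ex_minnP => m /asboolP Em mmin; split.
  by move=> En; apply: mmin; apply/asboolP.
move=> mn; exact: (Emono mn _ Em).
Qed.

Lemma kk_gt0 x : (0 < kk x)%N.
Proof.
rewrite lt0n; apply/negP => /eqP k0.
have := (kkP x (kk x)).2 (leqnn _); rewrite k0 hE0; by [].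
Qed.

Lemma ff_range : range ff `<=` [set (n.+1)%:R^-1 | n in [set: nat]].
Proof.
move=> _ [x _ <-]; exists (kk x).-1 => //; rewrite prednK //; exact: kk_gt0.
Qed.

Lemma ff_gt0 x : 0 < ff x.
Proof. by rewrite /ff invr_gt0 ltr0n kk_gt0. Qed.

Hypothesis hU : forall n (V : set X), open V -> V `&` U !=set0 ->
  exists y, [/\ V y, U y & ~ E n y].

Lemma disc x : U x -> ~ {for x, continuous ff}.
Proof.
move=> Ux /cvgrPdist_lt.
set eps := ff x - (kk x).+1%:R^-1.
have epos : 0 < eps.
  by rewrite subr_gt0 /ff ltf_pV2 ?posrE ?ltr0n ?kk_gt0// ltr_nat.
move=> /(_ eps epos); rewrite nbhsE => -[B [oB Bx] Bsub].
have [y [By Uy nEy]] := hU (kk x) B oB (ex_intro _ x (conj Bx Ux)).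
have := Bsub y By => /=.
have kxy : (kk x < kk y)%N by rewrite ltnNge; apply/negP => /(kkP y) /=.
have : ff y <= (kk x).+1%:R^-1.
  by rewrite /ff lef_pV2 ?posrE ?ltr0n ?kk_gt0// ler_nat.
move=> h1 h2.
have : eps <= `|ff x - ff y|.
  by apply: le_trans (ler_norm _); rewrite /eps lerD2l lerN2.
by rewrite leNgt h2.
Qed.


Lemma kk_eq {a j} : E j.+1 a -> ~ E j a -> kk a = j.+1.
Proof.
move=> /(kkP a) h1 h2; apply/eqP; rewrite eqn_leq h1 /= ltnNge.
by apply/negP => /(kkP a).
Qed.

Lemma ff_le {a N} : ~ E N a -> ff a <= N.+1%:R^-1.
Proof.
move=> h; rewrite /ff lef_pV2 ?posrE ?ltr0n ?kk_gt0// ler_nat ltnNge.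
by apply/negP => /(kkP a).
Qed.

Lemma ff_frag : fragmentable ff.
Proof.
move=> eps epos F cF [x0 Fx0].
have [N Neps] : exists N, N.+1%:R^-1 < eps.
  exists (Num.truncn eps^-1).
  by rewrite -ltf_pV2 ?posrE ?invr_gt0 // invrK truncnS_gt.
have key : forall j, F `<=` E j -> exists W : set X,
    [/\ open W, W `&` F !=set0 & (diam (ff @` (W `&` F)) < eps%:E)%E].
  elim=> [|j IH] FE.
    by have := FE _ Fx0; rewrite hE0.
  have [FEj|] := pselect (F `<=` E j); first exact: IH.
  move=> /existsNP [y] /not_implyP [Fy nEy].
  exists (~` E j); split; [exact: closed_openC | by exists y |].
  apply: (@le_lt_trans _ _ 0%:E); last by rewrite lte_fin.
  apply: diam_le => _ _ [a [nEa Fa] <-] [b [nEb Fb] <-].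
  by rewrite /ff (kk_eq (FE _ Fa) nEa) (kk_eq (FE _ Fb) nEb) subrr normr0.
have [Fs|] := pselect (F `<=` E N); first exact: key Fs.
move=> /existsNP [y] /not_implyP [Fy nEy].
exists (~` E N); split; [exact: closed_openC | by exists y |].
apply: (@le_lt_trans _ _ (N.+1%:R^-1)%:E); last by rewrite lte_fin.
apply: diam_le => _ _ [a [nEa Fa] <-] [b [nEb Fb] <-].
have := ff_le nEa; have := ff_le nEb; have := ff_gt0 a; have := ff_gt0 b.
rewrite ler_norml => h1 h2 h3 h4; move: (N.+1%:R^-1) (ff a) (ff b) h1 h2 h3 h4 => c u v *; apply/andP; split; lra.
Qed.

Hypothesis hG : forall A : set X, closed A ->
  exists G : nat -> set X, (forall n, open (G n)) /\ A = \bigcap_n G n.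

Lemma ff_leb : lebesgue_property ff.
Proof.
move=> eps epos.
have [G hGk] := choice (fun k => hG _ (hEc k)).
exists (fun n => match (unpickle n : option (nat * nat)) with
  | Some p => E p.1.+1 `&` ~` G p.1 p.2 | None => set0 end); split.
- move=> n; case: (unpickle n) => [[k m]|] /=; last exact: closed0.
  apply: closedI; first exact: hEc.
  apply: open_closedC; exact: (hGk k).1.
- apply/seteqP; split => // x _.
  have k0 := kk_gt0 x.
  have [k kE] : exists k, kk x = k.+1 by exists (kk x).-1; rewrite prednK.
  have nEk : ~ E k x by move=> /(kkP x); rewrite kE ltnn.
  have [m nGm] : exists m, ~ G k m x.
    apply/existsNP => allG; apply: nEk; rewrite (hGk k).2 => m _; exact: allG.
  exists (pickle (k, m)) => //=; rewrite pickleK /=; split => //.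
  by apply/(kkP x); rewrite kE.
- move=> n; apply: (@le_trans _ _ 0%:E); last by rewrite lee_fin ltW.
  case: (unpickle n) => [[k m]|] /=; last by apply: diam_le => ? ? [].
  apply: diam_le => _ _ [a [Ea nGa] <-] [b [Eb nGb] <-].
  have nE : forall c, ~ G k m c -> ~ E k c.
    by move=> c nG; rewrite (hGk k).2 => h; apply: nG; exact: h m I.
  by rewrite /ff (kk_eq Ea (nE _ nGa)) (kk_eq Eb (nE _ nGb)) subrr normr0.
Qed.

End Construction.

Fixpoint CC (X : topologicalType) (N : nat -> set X) (n : nat) : set X :=
  if n is m.+1 then CC X N m `|` closure (N m) else set0.
Arguments CC {X}.

Definition EE (X : topologicalType) (U : set X) (N : nat -> set X) (n : nat) : set X :=
  if n is m.+1 then ~` U `|` CC N m else set0.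
Arguments EE {X}.

Lemma CC_closed (X : topologicalType) (N : nat -> set X) n : closed (CC N n).
Proof.
elim: n => [|n IH] /=; first exact: closed0.
apply: closedU => //; exact: closed_closure.
Qed.

Lemma CC_avoid (X : topologicalType) (N : nat -> set X) :
  (forall n, nowhere_dense (N n)) ->
  forall m (W : set X), open W -> W !=set0 -> exists y, W y /\ ~ CC N m y.
Proof.
move=> ndN; elim=> [|m IH] W oW neW /=.
  by case: neW => y Wy; exists y; split.
have [y [Wy nCy]] := IH W oW neW.
have oW' : open (W `&` ~` CC N m).
  by apply: openI => //; apply: closed_openC; exact: CC_closed.
have [[z [[Wz nCz] nclz]]|] :=
  pselect (exists z, (W `&` ~` CC N m) z /\ ~ closure (N m) z).
  by exists z; split => // -[].
move=> /forallNP H.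
have : (closure (N m))° y.
  rewrite /interior nbhsE /=; exists (W `&` ~` CC N m); first by split.
  move=> z Wz; apply: contrapT => ncl; exact: (H z).
by rewrite (ndN m).
Qed.

Theorem lemma2p7 (R : realType) (X : topologicalType) :
  ~ baire_space X ->
  (exists (U : set X) (f : X -> R),
      [/\ open U, U !=set0, fragmentable f,
          (forall x, U x -> ~ {for x, continuous f}) &
          range f `<=` [set (n.+1)%:R^-1 | n in [set: nat]]]) /\
  (perfectly_normal X ->
   exists (U : set X) (f : X -> R),
      [/\ open U, U !=set0, fragmentable f,
          (forall x, U x -> ~ {for x, continuous f}) &
          range f `<=` [set (n.+1)%:R^-1 | n in [set: nat]] /\
          lebesgue_property f]).
Proof.
move=> nB.
have [U] : exists U : set X, ~ (open U -> U !=set0 -> ~ meager U).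
  apply: contrapT => H; apply: nB => U oU neU mU; apply: H.
  by exists U => h; exact: h oU neU mU.
move=> /not_implyP [oU /not_implyP [neU /contrapT [N [ndN sub]]]].
pose E := EE U N.
have hE0 : E 0 = set0 by [].
have hEc : forall n, closed (E n).
  case=> [|n] /=; first exact: closed0.
  apply: closedU; [exact: open_closedC | exact: CC_closed].
have hEm : forall n, E n `<=` E n.+1.
  case=> [|n] /=; first by [].
  by move=> x [?|?]; [left | right; left].
have hEcov : forall x, exists n, E n x.
  move=> x; have [Ux|nUx] := pselect (U x); last by exists 1%N; left.
  have [n _ Nx] := sub x Ux.
  by exists n.+2; right; right; exact: subset_closure.
have hU : forall n (V : set X), open V -> V `&` U !=set0 ->
    exists y, [/\ V y, U y & ~ E n y].
  case=> [|n] V oV neV.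
    by case: neV => y [Vy Uy]; exists y; split.
  have [y [[Vy Uy] nCy]] := @CC_avoid X N ndN n _ (openI oV oU) neV.
  by exists y; split => // -[].
split.
  exists U, (ff R X E hEcov); split => //.
  - exact: (ff_frag R X E hE0 hEc hEm hEcov).
  - move=> x Ux; exact: (disc R X U E hE0 hEm hEcov hU x Ux).
  - exact: (ff_range R X E hE0 hEm hEcov).
move=> [_ hG].
exists U, (ff R X E hEcov); split => //.
- exact: (ff_frag R X E hE0 hEc hEm hEcov).
- move=> x Ux; exact: (disc R X U E hE0 hEm hEcov hU x Ux).
- split; first exact: (ff_range R X E hE0 hEm hEcov).
  exact: (ff_leb R X E hE0 hEc hEm hEcov hG).
Qed.
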